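(* Let $K$ be an imaginary quadratic field, let $f\ge1$, and let $A=\mathbb{C}/\mathcal{O}_f\times\mathbb{C}/\mathfrak{a}$, where $\mathfrak{a}\subset K$ is a lattice whose conductor divides $f$. If $F\subset A$ is an elliptic curve, then the conductor of $F$ divides $f$.
   Context: $\mathcal{O}_m=\mathbb{Z}+m\mathcal{O}_K$. A lattice in $K$ is a free abelian subgroup of rank 2; its conductor is the $m$ with $\{\alpha\in K:\alpha\mathfrak{a}\subset\mathfrak{a}\}=\mathcal{O}_m$. An elliptic curve $F\subset A$ has CM by $K$, so $F\cong\mathbb{C}/\mathfrak{b}$ for a lattice $\mathfrak{b}\subset K$, and its conductor is that of $\mathfrak{b}$. *)

(* Defs.v *)
From HB Require Import structures.
From mathcomp Require Import all_boot all_order all_algebra.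
From mathcomp Require Import reals.
From mathcomp.real_closed Require Import complex.
Set Implicit Arguments. Unset Strict Implicit. Unset Printing Implicit Defensive.
Import Order.TTheory GRing.Theory Num.Theory.
Local Open Scope ring_scope.

(* Subsets of C are predicates C -> Prop.  C is an arbitrary
   algebraically closed numeric field; in the theorem it is instantiated
   with the complex numbers R[i] over a model R of the reals. *)
Section CMDefs.
Variable C : numClosedFieldType.

Definition alg_int (x : C) : Prop :=
  exists p : {poly int}, p \is monic /\ root (map_poly intr p) x.

Definition imag_quad_gen (omega : C) : Prop :=
  (exists r : rat, omega ^+ 2 = ratr r) /\ omega \notin Num.real.

Definition Kfield (omega : C) (x : C) : Prop :=
  exists p q : rat, x = ratr p + ratr q * omega.

Definition OK (omega : C) (x : C) : Prop := Kfield omega x /\ alg_int x.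

Definition order_of (omega : C) (m : nat) (x : C) : Prop :=
  exists (n : int) (y : C), OK omega y /\ x = n%:~R + m%:R * y.

Definition Zspan (e1 e2 : C) (x : C) : Prop :=
  exists a b : int, x = a%:~R * e1 + b%:~R * e2.

Definition lattice_in_K (omega : C) (L : C -> Prop) : Prop :=
  exists e1 e2 : C, Kfield omega e1 /\ Kfield omega e2 /\
    (forall a b : int, a%:~R * e1 + b%:~R * e2 = 0 -> a = 0 /\ b = 0) /\
    (forall x, L x <-> Zspan e1 e2 x).

Definition lattice_in_C (L : C -> Prop) : Prop :=
  exists e1 e2 : C,
    (forall a b : C, a \is Num.real -> b \is Num.real ->
       a * e1 + b * e2 = 0 -> a = 0 /\ b = 0) /\
    (forall x, L x <-> Zspan e1 e2 x).

Definition multiplier (L : C -> Prop) (alpha : C) : Prop :=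
  forall x, L x -> L (alpha * x).

Definition has_conductor (omega : C) (L : C -> Prop) (m : nat) : Prop :=
  (0 < m)%N /\ forall alpha, multiplier L alpha <-> order_of omega m alpha.

(* The abelian surface A = C^2 / (L1 x L2).  An elliptic curve F ⊂ A is a
   one-dimensional complex subtorus: F = W / (W ∩ (L1 x L2)) for a complex
   line W = C w (w != 0) such that W ∩ (L1 x L2) is a lattice in W.
   Identifying W with C via t |-> t w, F ≅ C / curve_lattice L1 L2 w. *)
Definition curve_lattice (L1 L2 : C -> Prop) (w : C * C) (t : C) : Prop :=
  L1 (t * w.1) /\ L2 (t * w.2).

Definition elliptic_curve_in (L1 L2 : C -> Prop) (w : C * C) : Prop :=
  w != (0, 0) /\ lattice_in_C (curve_lattice L1 L2 w).

End CMDefs.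

(* Main.v *)
Require Import Defs.
From HB Require Import structures.
From mathcomp Require Import all_boot all_order all_algebra.
From mathcomp Require Import reals.
From mathcomp.real_closed Require Import complex.
From mathcomp Require Import ring.
From Stdlib Require Import Classical.
Set Implicit Arguments. Unset Strict Implicit. Unset Printing Implicit Defensive.
Import Order.TTheory GRing.Theory Num.Theory.
Local Open Scope ring_scope.
Local Notation pZtoQ := (map_poly (intr : int -> rat)).

Definition Zq (x : rat) := exists n : int, x = n%:~R.

Lemma gauss_monic (m : {poly rat}) (P : {poly int}) :
  m \is monic -> P \is monic -> m %| pZtoQ P -> forall i, Zq m`_i.
Proof.
move=> mm mP /dvdpP_rat_int [p1 [a nza Dm] [r DP]] i.
set l := lead_coef p1.
have lP : l * lead_coef r = 1 by rewrite /l -lead_coefM -DP; apply/monicP.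
have up1 : l \is a GRing.unit by apply/unitrPr; exists (lead_coef r).
have lm : a * l%:~R = 1.
  by move/monicP: mm; rewrite Dm lead_coefZ lead_coef_map_inj //; exact: intr_inj.
have la : (l%:~R : rat) != 0.
  by rewrite intr_eq0; apply: contraTneq up1 => ->; rewrite unitr0.
have Da : a = (l^-1)%:~R.
  have h1 : (l%:~R : rat) * (l^-1)%:~R = 1.
    by rewrite -intrM mulrV.
  by rewrite -(mulr1 a) -[X in a * X]h1 mulrA lm mul1r.
exists (l^-1 * p1`_i); rewrite Dm coefZ coef_map /= Da intrM //.
Qed.

Lemma rat_root (P : {poly int}) (x : rat) :
  P \is monic -> (pZtoQ P).[x] = 0 -> Zq x.
Proof.
move=> mP r0.
have dv : 'X - x%:P %| pZtoQ P by rewrite dvdp_XsubCl /root r0.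
have [n hn] := @gauss_monic _ _ (monicXsubC x) mP dv 0%N.
exists (- n); rewrite rmorphN /= -hn coefB coefX coefC /=; ring.
Qed.

Definition qp (R : nzRingType) (b c : R) : {poly R} := 'X^2 + (b%:P * 'X + c%:P).

Lemma size_qp_low (R : nzRingType) (b c : R) : (size (b%:P * 'X + c%:P)%R < 3)%N.
Proof.
rewrite size_MXaddC; case: ifP => // _.
by rewrite !ltnS size_polyC_leq1.
Qed.

Lemma qp_monic (R : nzRingType) (b c : R) : qp b c \is monic.
Proof.
apply/monicP; rewrite /qp lead_coefDl ?lead_coefXn // size_polyXn.
exact: size_qp_low.
Qed.

Lemma size_qp (R : nzRingType) (b c : R) : size (qp b c) = 3%N.
Proof. by rewrite /qp size_polyDl size_polyXn // size_qp_low. Qed.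

Lemma qp_coef0 (R : nzRingType) (b c : R) : (qp b c)`_0 = c.
Proof. by rewrite /qp !coefD coefXn coefMX !coefC /= !add0r. Qed.

Lemma qp_coef1 (R : nzRingType) (b c : R) : (qp b c)`_1 = b.
Proof. by rewrite /qp !coefD coefXn coefMX !coefC /= add0r addr0. Qed.

Lemma qp_eval (R S : comNzRingType) (f : {rmorphism R -> S}) (b c : R) (x : S) :
  (map_poly f (qp b c)).[x] = x ^+ 2 + f b * x + f c.
Proof.
rewrite /qp !rmorphD !rmorphM /= map_polyX !map_polyC /=.
by rewrite !hornerE expr2.
Qed.

Lemma rat_quad (x : rat) (b c : int) :
  x ^+ 2 + b%:~R * x + c%:~R = 0 -> Zq x.
Proof.
move=> h; apply: (@rat_root (qp b c) x (qp_monic b c)).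
by rewrite (qp_eval (intr : {rmorphism int -> rat})).
Qed.

Lemma ZqD x y : Zq x -> Zq y -> Zq (x + y).
Proof. by move=> [a ->] [b ->]; exists (a + b); rewrite rmorphD. Qed.
Lemma ZqM x y : Zq x -> Zq y -> Zq (x * y).
Proof. by move=> [a ->] [b ->]; exists (a * b); rewrite rmorphM. Qed.
Lemma ZqN x : Zq x -> Zq (- x).
Proof. by move=> [a ->]; exists (- a); rewrite rmorphN. Qed.
Lemma Zqint (n : int) : Zq n%:~R.
Proof. by exists n. Qed.
Section Quad.
Variable C : numClosedFieldType.
Variables (omega : C) (r : rat).
Hypothesis Hw : omega \notin Num.real.
Lemma ratr_real (x : rat) : (ratr x : C) \is Num.real.
Proof. by rewrite realE ler0q lerq0 le_total. Qed.
Lemma indep p q : ratr p + ratr q * omega = 0 -> p = 0 /\ q = 0.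
Proof.
move=> h; have [q0|nq] := eqVneq q 0.
  subst q; rewrite rmorph0 mul0r addr0 in h; split => //.
  by move/eqP: h; rewrite fmorph_eq0 => /eqP.
exfalso; move/negP: Hw; apply.
have nq' : (ratr q : C) != 0 by rewrite fmorph_eq0.
have h' : ratr q * omega = - ratr p by apply/eqP; rewrite -addr_eq0 addrC h.
have -> : omega = - ratr p / ratr q.
  by rewrite -{1}(mulKf nq' omega) h' mulrC.
by rewrite rpredM ?rpredN ?rpredV ?ratr_real.
Qed.
Lemma alg_int_quad (x : C) (b c : int) :
  x ^+ 2 + b%:~R * x + c%:~R = 0 -> alg_int x.
Proof.
move=> h; exists (qp b c); split; first exact: qp_monic.
by rewrite /root (qp_eval (intr : {rmorphism int -> C})) h.
Qed.
Hypothesis Hr : omega ^+ 2 = ratr r.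
Lemma OK_char_rev p q : Zq (2 * p) -> Zq (p ^+ 2 - q ^+ 2 * r) ->
  OK omega (ratr p + ratr q * omega).
Proof.
move=> [T hT] [N hN]; split; first by exists p, q.
apply: (@alg_int_quad _ (- T) N).
have eT : ((- T)%:~R : C) = - (2 * ratr p).
  by rewrite rmorphN /= -ratr_int -hT rmorphM /= ratr_nat.
have eN : (N%:~R : C) = ratr p ^+ 2 - ratr q ^+ 2 * omega ^+ 2.
  rewrite -ratr_int -hN rmorphB !rmorphM /= Hr; ring.
rewrite eT eN; ring.
Qed.

Lemma map_ratr_int (P : {poly int}) :
  map_poly (ratr : rat -> C) (pZtoQ P) = map_poly intr P.
Proof. rewrite -map_poly_comp; apply: eq_map_poly => z /=; exact: ratr_int. Qed.

Lemma Zq2 : Zq 2.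
Proof. by exists 2%:Z. Qed.

Lemma OK_char_fwd p q : alg_int (ratr p + ratr q * omega) ->
  Zq (2 * p) /\ Zq (p ^+ 2 - q ^+ 2 * r).
Proof.
move=> [P [mP rP]].
set x := ratr p + ratr q * omega in rP.
move: rP; rewrite /root => /eqP rP.
have [q0|nq] := eqVneq q 0.
  subst q.
  have hp : Zq p.
    apply: (rat_root mP).
    apply/eqP; rewrite -(fmorph_eq0 (ratr : {rmorphism rat -> C})) -horner_map.
    by rewrite map_ratr_int /= -rP /x rmorph0 mul0r addr0.
  split; first by apply: ZqM => //; exact: Zq2.
  have -> : p ^+ 2 - 0 ^+ 2 * r = p * p by ring.
  exact: ZqM.
set m := qp (- (2 * p)) (p ^+ 2 - q ^+ 2 * r).
have mx : (map_poly (ratr : {rmorphism rat -> C}) m).[x] = 0.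
  rewrite (qp_eval (ratr : {rmorphism rat -> C})) /x.
  rewrite rmorphN rmorphB !rmorphM /= ratr_nat -Hr; ring.
have m0 : m != 0 by apply: monic_neq0; exact: qp_monic.
set R := pZtoQ P %% m.
have sR : (size R <= 2)%N.
  by rewrite -ltnS -(size_qp (- (2 * p)) (p ^+ 2 - q ^+ 2 * r)) ltn_modp.
have Rx : (map_poly (ratr : {rmorphism rat -> C}) R).[x] = 0.
  have := divp_eq (pZtoQ P) m.
  move/(congr1 (fun Q => (map_poly (ratr : {rmorphism rat -> C}) Q).[x])).
  rewrite map_ratr_int rmorphD rmorphM /= hornerD hornerM mx mulr0 add0r.
  by rewrite rP => <-.
have Rx2 : ratr R`_0 + ratr R`_1 * x = 0.
  rewrite -Rx (@horner_coef_wide _ 2%N _ x) ?size_map_poly //.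
  by rewrite !big_ord_recl big_ord0 !coef_map /= expr0 expr1 mulr1 addr0.
have [h1 h2] : R`_0 + R`_1 * p = 0 /\ R`_1 * q = 0.
  apply: indep; rewrite -Rx2 /x rmorphD !rmorphM /=; ring.
have R1 : R`_1 = 0 by move/eqP: h2; rewrite mulf_eq0 (negbTE nq) orbF => /eqP.
have R0 : R`_0 = 0 by move: h1; rewrite R1 mul0r addr0.
have R00 : R = 0.
  apply/polyP => i; rewrite coef0.
  case: i => [|[|i]] //; apply: nth_default; exact: leq_trans sR _.
have dv : m %| pZtoQ P by apply/modp_eq0P.
have G := gauss_monic (qp_monic _ _) mP dv.
split.
  by have := G 1%N; rewrite qp_coef1 => /ZqN; rewrite opprK.
by have := G 0%N; rewrite qp_coef0.
Qed.
End Quad.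

Lemma ex_min (P : nat -> Prop) n : P n ->
  exists k, P k /\ forall m, (m < k)%N -> ~ P m.
Proof.
elim: n {-2}n (leqnn n) => [|n IH] k hk Pk.
  exists k; split => // m; move: hk; rewrite leqn0 => /eqP ->; by [].
have [[m [lmk Pm]]|nm] := classic (exists m, (m < k)%N /\ P m).
  by apply: (IH m) => //; rewrite -ltnS; exact: leq_trans lmk hk.
exists k; split => // m lmk Pm; apply: nm; by exists m.
Qed.

Section Quad2.
Variable C : numClosedFieldType.
Variables (omega : C) (r : rat).
Hypothesis Hr : omega ^+ 2 = ratr r.
Hypothesis Hw : omega \notin Num.real.

Definition Kq p q : C := ratr p + ratr q * omega.

Lemma OKchar p q : OK omega (Kq p q) <-> Zq (2 * p) /\ Zq (p ^+ 2 - q ^+ 2 * r).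
Proof.
split; first by move=> [_ h]; apply: (OK_char_fwd Hw Hr); exact: h.
by move=> [h1 h2]; apply: (OK_char_rev Hr)...
Qed.

Lemma OK_sub p q p' q' : OK omega (Kq p q) -> OK omega (Kq p' q') ->
  OK omega (Kq (p - p') (q - q')).
Proof.
move=> /OKchar [[P hP] [N hN]] /OKchar [[P' hP'] [N' hN']].
have ZB : Zq (4 * q * q' * r).
  apply: (@rat_quad _ 0 (- ((P ^+ 2 - 4 * N) * (P' ^+ 2 - 4 * N')))).
  rewrite !(rmorphN, rmorphM, rmorphB, rmorphD, rmorphXn, rmorph1, rmorph0) /= -hP -hN -hP' -hN'.
  ring.
have [B hB] := ZB.
have Ze : Zq (2 * (p * p' - q * q' * r)).
  apply: (@rat_quad _ B (- (N * P' ^+ 2 + N' * P ^+ 2 - 4 * N * N'))).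
  rewrite -hB !(rmorphN, rmorphM, rmorphB, rmorphD, rmorphXn, rmorph1, rmorph0) /= -hP -hN -hP' -hN'.
  ring.
apply/OKchar; split.
  have -> : 2 * (p - p') = 2 * p - 2 * p' by ring.
  by apply: ZqD; [exists P | apply: ZqN; exists P'].
have -> : (p - p') ^+ 2 - (q - q') ^+ 2 * r =
  (p ^+ 2 - q ^+ 2 * r) + (p' ^+ 2 - q' ^+ 2 * r) - 2 * (p * p' - q * q' * r) by ring.
by apply: ZqD; [apply: ZqD; [exists N | exists N'] | apply: ZqN].
Qed.

Lemma OK_scale (z : int) p q : OK omega (Kq p q) -> OK omega (Kq (z%:~R * p) (z%:~R * q)).
Proof.
move=> /OKchar [h1 h2]; apply/OKchar; split.
  have -> : 2 * (z%:~R * p) = z%:~R * (2 * p) by ring.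
  exact: ZqM (Zqint z) h1.
have -> : (z%:~R * p) ^+ 2 - (z%:~R * q) ^+ 2 * r = (z%:~R * z%:~R) * (p ^+ 2 - q ^+ 2 * r) by ring.
exact: ZqM (ZqM (Zqint z) (Zqint z)) h2.
Qed.

Lemma OK_int (z : int) : OK omega (Kq z%:~R 0).
Proof.
apply/OKchar; split; first by apply: ZqM; [exact: Zq2 | exact: Zqint].
have -> : (z%:~R : rat) ^+ 2 - 0 ^+ 2 * r = z%:~R * z%:~R by ring.
exact: ZqM (Zqint z) (Zqint z).
Qed.

Lemma OK_rat c : OK omega (Kq c 0) -> Zq c.
Proof.
move=> /OKchar [_ [n hn]].
apply: (@rat_quad _ 0 (- n)); rewrite rmorphN /= -hn; ring.
Qed.


Lemma r_neq0 : r != 0.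
Proof.
apply/eqP => r0; move/negP: Hw; apply.
have : omega ^+ 2 == 0 by rewrite Hr r0 rmorph0.
by rewrite expf_eq0 /= => /eqP ->; exact: real0.
Qed.

Definition N0 : int := 2 * numq r.

Lemma N0_neq0 : N0 != 0.
Proof. by rewrite /N0 mulf_neq0 // numq_eq0 r_neq0. Qed.

Lemma N0q_neq0 : (N0%:~R : rat) != 0.
Proof. by rewrite intr_eq0 N0_neq0. Qed.

Lemma discrete p q : OK omega (Kq p q) -> Zq (N0%:~R * q).
Proof.
move=> /OKchar [[P hP] [N hN]].
apply: (@rat_quad _ 0 (- ((P ^+ 2 - 4 * N) * numq r * denq r))).
rewrite /N0 !(rmorphN, rmorphM, rmorphB, rmorphD, rmorphXn, rmorph1, rmorph0) /= -hP -hN numqE.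
ring.
Qed.

Definition G (n : int) : Prop := exists p, OK omega (Kq p (n%:~R / N0%:~R)).

Lemma G_sub n m : G n -> G m -> G (n - m).
Proof.
move=> [p hp] [p' hp']; exists (p - p').
have -> : ((n - m)%:~R / N0%:~R : rat) = n%:~R / N0%:~R - m%:~R / N0%:~R.
  by rewrite rmorphB mulrBl.
exact: OK_sub.
Qed.

Lemma G_scale z n : G n -> G (z * n).
Proof.
move=> [p hp]; exists (z%:~R * p).
have -> : ((z * n)%:~R / N0%:~R : rat) = z%:~R * (n%:~R / N0%:~R).
  by rewrite rmorphM mulrA.
exact: OK_scale.
Qed.

Lemma G_of p q : OK omega (Kq p q) -> exists n, G n /\ q = n%:~R / N0%:~R.
Proof.
move=> h; have [n hn] := discrete h.
have eq : q = n%:~R / N0%:~R by rewrite -hn mulrC mulKf // N0q_neq0.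
by exists n; split => //; exists p; rewrite -eq.
Qed.

Lemma G_nz : G (N0 * denq r).
Proof.
have h : OK omega (Kq 0 (denq r)%:~R).
  apply/OKchar; split; first by exists 0; rewrite mulr0.
  exists (- (denq r * numq r)).
  rewrite rmorphN rmorphM /= numqE; ring.
have [n [Gn hn]] := G_of h.
have -> : N0 * denq r = n.
  apply: (@intr_inj rat); rewrite rmorphM /= hn.
  by rewrite mulrC divfK // N0q_neq0.
exact: Gn.
Qed.

Lemma basis_exists : exists (p0 q0 : rat) (u v : int),
  q0 != 0 /\ OK omega (Kq p0 q0) /\
  (Kq p0 q0) ^+ 2 = u%:~R + v%:~R * Kq p0 q0 /\
  forall y, OK omega y <-> exists a b : int, y = a%:~R + b%:~R * Kq p0 q0.
Proof.
have Gabs n : G n -> G (`|n|%N).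
  move=> Gn; have [n0|n0] := leP 0 n; first by rewrite gez0_abs.
  rewrite lez0_abs ?ltW //; rewrite -mulN1r; exact: G_scale.
have P1 : (0 < `|(N0 * denq r)%R|%N)%N /\ G (`|(N0 * denq r)%R|%N).
  split; last exact: Gabs G_nz.
  by rewrite absz_gt0 mulf_neq0 ?N0_neq0 ?denq_neq0.
have [k0 [[k0pos Gk0] kmin]] := @ex_min (fun k => (0 < k)%N /\ G k) _ P1.
have [p0 hp0] := Gk0.
set q0 := ((k0 : int)%:~R / N0%:~R : rat) in hp0.
have q0nz : q0 != 0.
  by rewrite /q0 mulf_neq0 ?invr_eq0 ?N0q_neq0 // intr_eq0 -lt0n.
exists p0, q0.
have /OKchar [[T hT] [N hN]] := hp0.
exists (- N), T; split => //; split => //; split.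
  have eT : (T%:~R : C) = 2 * ratr p0.
    by rewrite -ratr_int -hT rmorphM /= ratr_nat.
  have eN : (N%:~R : C) = ratr p0 ^+ 2 - ratr q0 ^+ 2 * omega ^+ 2.
    by rewrite -ratr_int -hN rmorphB !rmorphM /= Hr; ring.
  by rewrite rmorphN /= eT eN /Kq; ring.
move=> y; split.
  move=> hy; have [[p [q yE]] _] := hy.
  have hy' : OK omega (Kq p q) by rewrite /Kq -yE.
  have [n [Gn qE]] := G_of hy'.
  set b := (n %/ k0)%Z.
  have Grm : G (n %% k0)%Z.
    have -> : (n %% k0)%Z = n - b * k0 by rewrite {2}(divz_eq n k0) addrC addKr.
    exact: G_sub Gn (G_scale b Gk0).
  have rm0 : (n %% k0)%Z = 0.
    have k0z : (k0 : int) != 0 by rewrite eqz_nat -lt0n.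
    have k0p : 0 < (k0 : int) by rewrite ltz_nat.
    have ge0 := modz_ge0 n k0z.
    have lt := @ltz_pmod n k0 k0p.
    apply/eqP; apply: contraT => nz.
    exfalso; apply: (kmin `|(n %% k0)%Z|%N).
      by rewrite -ltz_nat gez0_abs.
    split; first by rewrite absz_gt0.
    by rewrite gez0_abs.
  have nE : n = b * k0 by rewrite {1}(divz_eq n k0) rm0 addr0.
  have qE' : q = b%:~R * q0 by rewrite qE nE rmorphM /= /q0 mulrA.
  have h2 := OK_sub hy' (OK_scale b hp0).
  rewrite qE' subrr in h2.
  have [a ha] := OK_rat h2.
  have pE : p = a%:~R + b%:~R * p0 by rewrite -ha; ring.
  exists a, b; rewrite yE /Kq pE qE' !rmorphD !rmorphM /= !ratr_int.
  ring.
move=> [a [b ->]].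
have h := OK_sub (OK_int a) (OK_scale (- b) hp0).
suff -> : (a%:~R + b%:~R * Kq p0 q0 : C) =
  Kq (a%:~R - (- b)%:~R * p0) (0 - (- b)%:~R * q0) by [].
rewrite /Kq !rmorphB !rmorphM !rmorph0 /= !ratr_int rmorphN /=; ring.
Qed.

End Quad2.

Section Main.
Variable C : numClosedFieldType.
Variables (omega : C) (r : rat) (p0 q0 : rat) (u v : int).
Hypothesis Hr : omega ^+ 2 = ratr r.
Hypothesis Hw : omega \notin Num.real.
Hypothesis q0nz : q0 != 0.
Hypothesis hsq : (Kq omega p0 q0) ^+ 2 = u%:~R + v%:~R * Kq omega p0 q0.
Hypothesis hbas : forall y, OK omega y <->
  exists a b : int, y = a%:~R + b%:~R * Kq omega p0 q0.
Local Notation th := (Kq omega p0 q0).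

Lemma ord_iff k y : order_of omega k y <->
  exists c d : int, y = c%:~R + (k%:R * d%:~R) * th.
Proof.
split.
  move=> [n [y' [hy' ->]]]; have [c [d ->]] := (hbas y').1 hy'.
  exists (n + k%:Z * c), d; rewrite rmorphD rmorphM /=.
  have -> : ((k%:Z)%:~R : C) = k%:R by [].
  ring.
move=> [c [d ->]]; exists c, (d%:~R * th); split.
  by apply/hbas; exists 0, d; rewrite add0r.
ring.
Qed.

Variables (f m : nat) (a : C -> Prop) (w : C * C).
Hypothesis fpos : (0 < f)%N.
Hypothesis hcond : has_conductor omega a m.
Hypothesis mdvd : (m %| f)%N.
Hypothesis hlat : lattice_in_C (curve_lattice (order_of omega f) a w).

Local Notation Lam := (curve_lattice (order_of omega f) a w).
Local Notation M := (multiplier Lam).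

Lemma M_ftheta : M (f%:R * th).
Proof.
move=> t [h1 h2]; split.
  have [c [d E]] := (ord_iff _ _).1 h1.
  apply/ord_iff; exists (f%:Z ^+ 2 * d * u), (c + f%:Z * d * v).

  rewrite -mulrA E !rmorphD !rmorphM ?rmorphXn /=.
  have -> : ((f%:Z)%:~R : C) = f%:R by [].
  apply/eqP; rewrite -subr_eq0; apply/eqP.
  set F := (f%:R : C).
  transitivity (F * F * d%:~R * (th ^+ 2 - (u%:~R + v%:~R * th))); first by ring.
  by rewrite hsq subrr mulr0.
have [_ hm] := hcond.
rewrite -mulrA; apply: ((hm _).2) => //.
apply/ord_iff; exists 0, (f %/ m)%N%:Z.
have -> : (((f %/ m)%N%:Z)%:~R : C) = (f %/ m)%N%:R by [].
by rewrite -natrM mulnC divnK // add0r.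
Qed.


Lemma Lam_sub x y : Lam x -> Lam y -> Lam (x - y).
Proof.
have [e1 [e2 [_ hs]]] := hlat.
move=> /hs [a1 [b1 ->]] /hs [a2 [b2 ->]]; apply/hs; exists (a1 - a2), (b1 - b2).
rewrite !rmorphB /=; ring.
Qed.

Lemma Lam_int (z : int) x : Lam x -> Lam (z%:~R * x).
Proof.
have [e1 [e2 [_ hs]]] := hlat.
move=> /hs [a1 [b1 ->]]; apply/hs; exists (z * a1), (z * b1).
rewrite !rmorphM /=; ring.
Qed.

Lemma M_sub x y : M x -> M y -> M (x - y).
Proof. move=> hx hy t ht; rewrite mulrBl; exact: Lam_sub (hx t ht) (hy t ht). Qed.

Lemma M_int (z : int) : M z%:~R.
Proof. move=> t ht; exact: Lam_int. Qed.

Lemma M_zmul (z : int) x : M x -> M (z%:~R * x).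
Proof. move=> hx t ht; rewrite -mulrA; apply: Lam_int; exact: hx. Qed.

Lemma M_add x y : M x -> M y -> M (x + y).
Proof.
move=> hx hy; have := M_sub hx (M_zmul (-1) hy).
by rewrite rmorphN rmorph1 mulN1r opprK.
Qed.

Lemma M_OK al : M al -> OK omega al.
Proof.
have [e1 [e2 [hind hs]]] := hlat.
have L1 : Lam e1 by apply/hs; exists 1, 0; rewrite rmorph0 rmorph1 mul1r mul0r addr0.
have L2 : Lam e2 by apply/hs; exists 0, 1; rewrite rmorph0 rmorph1 mul1r mul0r add0r.
have e1nz : e1 != 0.
  apply/eqP => e0; have [] := hind 1 0 (real1 _) (real0 _); first by rewrite e0 !mul0r mulr0 addr0.
  by move/eqP; rewrite oner_eq0.
have coords X : M X -> exists x11 x12 x21 x22 : int,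
    X * e1 = x11%:~R * e1 + x12%:~R * e2 /\ X * e2 = x21%:~R * e1 + x22%:~R * e2.
  move=> hX; have /hs [x11 [x12 E1]] := hX _ L1; have /hs [x21 [x22 E2]] := hX _ L2.
  by exists x11, x12, x21, x22.
move=> hal.
have [x11 [x12 [x21 [x22 [E1 E2]]]]] := coords _ hal.
have [y11 [y12 [y21 [y22 [F1 F2]]]]] := coords _ M_ftheta.
have e2nz : e2 != 0.
  apply/eqP => e0; have [] := hind 0 1 (real0 _) (real1 _); first by rewrite e0 !mul0r mulr0 addr0.
  by move=> _ /eqP; rewrite oner_eq0.
split; last first.
  apply: (@alg_int_quad _ _ (- (x11 + x22)) (x11 * x22 - x12 * x21)).
  have h : (al ^+ 2 + (- (x11 + x22))%:~R * al + (x11 * x22 - x12 * x21)%:~R) * (e1 * e2) = 0.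
    rewrite !(rmorphN, rmorphD, rmorphB, rmorphM) /=.
    have E1' : (al - x11%:~R) * e1 = x12%:~R * e2 by rewrite mulrBl E1; ring.
    have E2' : (al - x22%:~R) * e2 = x21%:~R * e1 by rewrite mulrBl E2; ring.
    transitivity (((al - x11%:~R) * e1) * ((al - x22%:~R) * e2) - x12%:~R * x21%:~R * (e1 * e2)).
      by ring.
    by rewrite E1' E2'; ring.
  by move/eqP: h; rewrite mulf_eq0 mulf_eq0 (negbTE e1nz) (negbTE e2nz) /= orbF => /eqP.
have y12nz : (y12%:~R : C) != 0.
  rewrite intr_eq0; apply/eqP => y0; move: F1; rewrite y0 mul0r addr0 => F1.
  have fth : f%:R * th = y11%:~R by apply: (mulIf e1nz).
  have := @indep _ _ Hw (f%:R * p0 - y11%:~R) (f%:R * q0).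
  case.
    move: fth; rewrite /Kq !rmorphB !rmorphM /= ratr_int ratr_nat => fth.
    by rewrite -fth; ring.
  move=> _ /eqP; rewrite mulf_eq0 pnatr_eq0 (negbTE q0nz) orbF => /eqP f0.
  by move: fpos; rewrite f0.
have key : al * (y12%:~R * e1) = (x11%:~R * y12%:~R + x12%:~R * (f%:R * th - y11%:~R)) * e1.
  transitivity (y12%:~R * (al * e1)); first by ring.
  rewrite E1.
  transitivity (x11%:~R * y12%:~R * e1 + x12%:~R * (y12%:~R * e2)); first by ring.
  have -> : y12%:~R * e2 = f%:R * th * e1 - y11%:~R * e1 by rewrite F1; ring.
  ring.
have alE : al = (x11%:~R * y12%:~R + x12%:~R * (f%:R * th - y11%:~R)) / y12%:~R.
  apply: (mulIf y12nz); rewrite divfK //; apply: (mulIf e1nz); rewrite -key; ring.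
exists (x11%:~R + x12%:~R * (f%:R * p0 - y11%:~R) / y12%:~R), (x12%:~R * f%:R * q0 / y12%:~R).
rewrite alE /Kq !(rmorphD, rmorphB, rmorphM) /= !ratr_int ratr_nat fmorphV /= ratr_int.
field; done.
Qed.


Definition Sk k := (0 < k)%N /\ M (k%:R * th).

Lemma S_ord k y : Sk k -> order_of omega k y -> M y.
Proof.
move=> [_ hk] /ord_iff [c [d ->]].
rewrite (_ : k%:R * d%:~R * th = d%:~R * (k%:R * th)); last by ring.
exact: M_add (M_int c) (M_zmul d hk).
Qed.

Lemma S_gcd k l : Sk k -> Sk l -> Sk (gcdn k l).
Proof.
move=> [kp hk] [lp hl]; split; first by rewrite gcdn_gt0 kp.
have [x [y hxy]] := Bezoutz k l.
have -> : ((gcdn k l)%:R : C) = (gcdz k l)%:~R by [].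
rewrite -hxy rmorphD !rmorphM /=.
have -> : (x%:~R * (k%:Z)%:~R + y%:~R * (l%:Z)%:~R) * th =
  x%:~R * (k%:R * th) + y%:~R * (l%:R * th) by rewrite /=; ring.
exact: M_add (M_zmul x hk) (M_zmul y hl).
Qed.

Lemma main_gen : exists m', has_conductor omega Lam m' /\ (m' %| f)%N.
Proof.
have Sf : Sk f := conj fpos M_ftheta.
have [k0 [Sk0 kmin]] := @ex_min (fun k => Sk k) _ Sf.
have k0pos := Sk0.1.
have Sdiv j : Sk j -> (k0 %| j)%N.
  move=> Sj; have Sg := S_gcd Sk0 Sj.
  have gle : (gcdn k0 j <= k0)%N by apply: dvdn_leq => //; exact: dvdn_gcdl.
  case: (ltnP (gcdn k0 j) k0) => [lt | ge].
    by exfalso; apply: (kmin _ lt).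
  have : gcdn k0 j = k0 by apply/eqP; rewrite eqn_leq gle ge.
  by move/gcdn_idPl.
exists k0; split; last exact: Sdiv f Sf.
split => // al; split; last exact: S_ord Sk0.
move=> hal; have [c [d E]] := (hbas al).1 (M_OK hal).
have Md : M (d%:~R * th) by have := M_sub hal (M_int c); rewrite E addrC addKr.
have [d0|dnz] := eqVneq d 0.
  by apply/ord_iff; exists c, 0; rewrite E d0 !rmorph0 !mulr0 mul0r.
have Sd : Sk `|d|%N.
  split; first by rewrite absz_gt0.
  have -> : ((`|d|%N)%:R : C) = (((`|d|%N : int))%:~R) by [].
  have [dpos|dneg] := leP 0 d; first by rewrite gez0_abs.
  rewrite lez0_abs ?ltW // rmorphN /= -mulN1r -mulrA.
  have -> : (-1 : C) = (-1 : int)%:~R by rewrite rmorphN rmorph1.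
  exact: M_zmul.
have : (k0%:Z %| d)%Z by rewrite dvdzE /=; exact: Sdiv.
move/dvdzP => [e de].
apply/ord_iff; exists c, e; rewrite E de rmorphM /=.
have -> : ((k0%:Z)%:~R : C) = k0%:R by [].
ring.
Qed.

End Main.

Local Open Scope complex_scope.

Theorem lemma3p2 (R : realType) (omega : R[i]) (f : nat)
  (a : R[i] -> Prop) (w : R[i] * R[i]) :
  imag_quad_gen omega ->
  (0 < f)%N ->
  lattice_in_K omega a ->
  (exists m : nat, has_conductor omega a m /\ (m %| f)%N) ->
  elliptic_curve_in (order_of omega f) a w ->
  exists m : nat,
    has_conductor omega (curve_lattice (order_of omega f) a w) m /\ (m %| f)%N.
Proof.
move=> [[r0 Hr0] Hw] fpos _ [m [hcond mdvd]] [_ hlat].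
have [p0 [q0 [u [v [q0nz [_ [hsq hbas]]]]]]] := basis_exists Hr0 Hw.
exact: (main_gen Hw q0nz hsq hbas fpos hcond mdvd hlat).
Qed.
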